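(* Let $A$ be a countable set. Then it is possible to assign to each $a\subseteq A$ sequences $y_a\in\ell^2$ and $w_a\in\{1,2\}^\omega$ such that (1) for all $a,b\subseteq A$, $y_a\in\mathsf{HC}(w_b)$ if and only if $b\not\subseteq a$; and (2) the maps $a\mapsto y_a$ and $a\mapsto w_a$ are homeomorphisms between $2^A$ and their ranges (with $\ell^2$ carrying its norm topology and $\{1,2\}^\omega$ the product topology).
   Context: $\omega=\{0,1,2,\dots\}$. Subsets of $A$ are identified with their characteristic functions in $2^A$, which carries the product of discrete topologies. $\ell^2$ is the Hilbert space of square-summable real sequences indexed by $\omega$. For $w\in\{1,2\}^\omega$, $B_w:\ell^2\to\ell^2$ is $B_w(x)(i)=w(i)\,x(i+1)$, and $\mathsf{HC}(w)$ is the set of $x\in\ell^2$ such that $\{B_w^k(x):k\in\omega\}$ is dense in $\ell^2$. *)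

(* Defs.v *)
From Stdlib Require Import Reals List.
From Coquelicot Require Import Coquelicot.
Open Scope R_scope.

Definition in_l2 (x : nat -> R) : Prop := ex_series (fun i => (x i) ^ 2).

Definition l2dist (x y : nat -> R) : R :=
  sqrt (Series (fun i => (x i - y i) ^ 2)).

Definition is_weight (w : nat -> R) : Prop := forall i, w i = 1 \/ w i = 2.

Definition Bw (w : nat -> R) (x : nat -> R) : nat -> R :=
  fun i => w i * x (S i).

Fixpoint Bw_iter (w : nat -> R) (k : nat) (x : nat -> R) : nat -> R :=
  match k with
  | O => x
  | S k' => Bw w (Bw_iter w k' x)
  end.

Definition HC (w : nat -> R) (x : nat -> R) : Prop :=
  in_l2 x /\
  forall z, in_l2 z -> forall eps, 0 < eps ->
    exists k, l2dist (Bw_iter w k x) z < eps.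

Definition countable_type (A : Type) : Prop :=
  exists f : A -> nat, forall u v, f u = f v -> u = v.

Definition subset_of {A : Type} (b a : A -> bool) : Prop :=
  forall u, b u = true -> a u = true.

(* b agrees with a on the finite set F: basic product-topology neighbourhood *)
Definition agree_on {A : Type} (F : list A) (a b : A -> bool) : Prop :=
  forall u, In u F -> b u = a u.

Definition homeo_onto_range_l2 {A : Type} (y : (A -> bool) -> nat -> R) : Prop :=
  (forall a b, y a = y b -> a = b) /\
  (* continuity of a |-> y_a *)
  (forall a eps, 0 < eps ->
     exists F : list A, forall b, agree_on F a b -> l2dist (y b) (y a) < eps) /\
  (* continuity of the inverse y_a |-> a on the range (each coordinate) *)
  (forall a (u : A), exists delta, 0 < delta /\
     forall b, l2dist (y b) (y a) < delta -> b u = a u).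

Definition homeo_onto_range_w {A : Type} (w : (A -> bool) -> nat -> R) : Prop :=
  (forall a b, w a = w b -> a = b) /\
  (* continuity of a |-> w_a : each coordinate locally constant *)
  (forall a (i : nat),
     exists F : list A, forall b, agree_on F a b -> w b i = w a i) /\
  (* continuity of the inverse on the range *)
  (forall a (u : A), exists N : nat,
     forall b, (forall i, (i < N)%nat -> w b i = w a i) -> b u = a u).

(* Main.v *)
Require Import Defs.
From Stdlib Require Import Reals List.
From Coquelicot Require Import Coquelicot.
From Stdlib Require Import Lia Lra Arith ZArith Cantor ClassicalEpsilon Classical FunctionalExtensionality.
Open Scope R_scope.

Lemma Series_nonneg' a : (forall n, 0 <= a n) -> ex_series a -> 0 <= Series a.
Proof.
  intros Ha He.
  assert (H := Series_le (fun n => 0 * a n) a).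
  rewrite Series_scal_l in H. 
  assert (0 * Series a <= Series a) by (apply H; auto; intro n; specialize (Ha n); split; lra).
  lra.
Qed.

Lemma sum_nonneg a k : (forall n, 0 <= a n) -> 0 <= sum_f_R0 a k.
Proof. intros Ha; induction k; simpl; auto. specialize (Ha (S k)); lra. Qed.

Lemma sum_ge_term a k : (forall n, 0 <= a n) -> a k <= sum_f_R0 a k.
Proof.
  intros Ha; destruct k; simpl. lra.
  assert (0 <= sum_f_R0 a k) by (apply sum_nonneg; auto). lra.
Qed.

Lemma term_le_Series a k : (forall n, 0 <= a n) -> ex_series a -> a k <= Series a.
Proof.
  intros Ha He.
  rewrite (Series_incr_n a (S k)) by (auto; lia). simpl Init.Nat.pred.
  assert (0 <= Series (fun j => a (S k + j)%nat)).
  { apply Series_nonneg'. intro; auto. apply (ex_series_incr_n a (S k)); auto. }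
  assert (a k <= sum_f_R0 a k) by (apply sum_ge_term; auto). lra.
Qed.

Lemma ex_series_dom a b : (forall n, 0 <= a n <= b n) -> ex_series b -> ex_series a.
Proof.
  intros H Hb. apply (ex_series_le a b); auto.
  intro n. unfold norm; simpl. unfold abs; simpl. rewrite Rabs_pos_eq by (apply H). apply H.
Qed.

Lemma is_series_geomh : is_series (fun n => (/2)^n) 2.
Proof.
  assert (H : Rabs (/2) < 1) by (rewrite Rabs_pos_eq; lra).
  assert (H2 := is_series_geom (/2) H). replace (/ (1 - /2)) with 2 in H2 by field. exact H2.
Qed.

Lemma is_series_geomc c : is_series (fun n => c * (/2)^n) (c * 2).
Proof. apply (is_series_scal_l c _ _ is_series_geomh). Qed.

Lemma ex_series_geomc c : ex_series (fun n => c * (/2)^n).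
Proof. eexists; apply is_series_geomc. Qed.

Lemma Series_geomc c : Series (fun n => c * (/2)^n) = c * 2.
Proof. apply is_series_unique, is_series_geomc. Qed.

Lemma tail_small a eps : (forall n, 0 <= a n) -> ex_series a -> 0 < eps ->
  exists N, Series (fun k => a (S N + k)%nat) < eps.
Proof.
  intros Ha He Heps.
  assert (Hc := Series_correct a He).
  assert (Hl : is_lim_seq (sum_n a) (Series a)) by exact Hc.
  apply is_lim_seq_spec in Hl. destruct (Hl (mkposreal eps Heps)) as [N HN].
  exists N. specialize (HN N (le_n N)). simpl in HN.
  rewrite sum_n_Reals in HN.
  rewrite (Series_incr_n a (S N)) in HN by (auto; lia). simpl Init.Nat.pred in HN.
  apply Rabs_lt_between in HN. lra.
Qed.

Lemma sum_const_upto f N c : (forall i, (i <= N)%nat -> f i = c) -> sum_f_R0 f N = INR (S N) * c.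
Proof.
  induction N; intros H; simpl.
  - rewrite H by lia. lra.
  - rewrite IHN by (intros; apply H; lia). rewrite H by lia. rewrite S_INR. destruct N; simpl; lra.
Qed.

Lemma sum_zero_upto f N : (forall i, (i <= N)%nat -> f i = 0) -> sum_f_R0 f N = 0.
Proof. intros H. rewrite (sum_const_upto f N 0); auto; lra. Qed.

Lemma sq_diff_le u v : (u - v)^2 <= 2 * u^2 + 2 * v^2.
Proof. pose proof (pow2_ge_0 (u+v)). nra. Qed.

Lemma l2_diff u v : in_l2 u -> in_l2 v -> ex_series (fun i => (u i - v i)^2).
Proof.
  intros Hu Hv. apply (ex_series_dom _ (fun i => 2 * (u i)^2 + 2 * (v i)^2)).
  - intro n; split. apply pow2_ge_0. apply sq_diff_le.
  - apply (ex_series_plus (fun i => 2 * (u i)^2) (fun i => 2 * (v i)^2));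
    [apply (ex_series_scal_l 2 (fun i => u i ^ 2)) | apply (ex_series_scal_l 2 (fun i => v i ^ 2))]; auto.
Qed.

Lemma l2dist_ge_coord u v k : in_l2 u -> in_l2 v -> Rabs (u k - v k) <= l2dist u v.
Proof.
  intros Hu Hv. unfold l2dist.
  rewrite <- sqrt_Rsqr_abs. apply sqrt_le_1_alt. unfold Rsqr.
  replace ((u k - v k) * (u k - v k)) with ((u k - v k)^2) by ring.
  apply (term_le_Series (fun i => (u i - v i)^2)). intro; apply pow2_ge_0.
  apply l2_diff; auto.
Qed.

Lemma l2dist_self u : l2dist u u = 0.
Proof.
  unfold l2dist. rewrite (Series_ext _ (fun i => 0 * (/2)^i)).
  rewrite Series_geomc. replace (0*2) with 0 by ring. apply sqrt_0.
  intro; ring.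
Qed.

Lemma l2dist_lt u v eps : 0 < eps -> ex_series (fun i => (u i - v i)^2) ->
  Series (fun i => (u i - v i)^2) < eps^2 -> l2dist u v < eps.
Proof.
  intros He Hs Hlt. unfold l2dist.
  rewrite <- (sqrt_pow2 eps) by lra. apply sqrt_lt_1_alt. split; auto.
  apply Series_nonneg'; auto. intro; apply pow2_ge_0.
Qed.

Fixpoint Wwin (w : nat -> R) (i k : nat) : R :=
  match k with O => 1 | S k' => w i * Wwin w (S i) k' end.
Fixpoint Pp (w : nat -> R) (m : nat) : R :=
  match m with O => 1 | S m' => Pp w m' * w m' end.

Lemma Bw_iter_eq w k x i : Bw_iter w k x i = Wwin w i k * x (i + k)%nat.
Proof.
  revert i; induction k; intros i; simpl.
  - rewrite Nat.add_0_r; ring.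
  - unfold Bw. rewrite IHk. replace (S i + k)%nat with (i + S k)%nat by lia. ring.
Qed.

Lemma Pp_Wwin w i k : Pp w i * Wwin w i k = Pp w (i + k).
Proof.
  revert i; induction k; intros i; simpl.
  - rewrite Nat.add_0_r; ring.
  - rewrite <- Rmult_assoc. change (Pp w i * w i) with (Pp w (S i)). rewrite IHk.
    f_equal. lia.
Qed.

Definition wt12 (w : nat -> R) := forall i, w i = 1 \/ w i = 2.

Lemma Pp_ge1 w m : wt12 w -> 1 <= Pp w m.
Proof. intros H; induction m; simpl. lra. destruct (H m) as [-> | ->]; lra. Qed.

Lemma Pp_mono w m d : wt12 w -> Pp w (m + d) <= Pp w m * 2^d.
Proof.
  intros H; induction d; simpl.
  - rewrite Nat.add_0_r; lra.
  - replace (m + S d)%nat with (S (m + d)) by lia. simpl.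
    assert (1 <= Pp w (m+d)) by (apply Pp_ge1; auto).
    destruct (H (m+d)%nat) as [-> | ->]; nra.
Qed.

Lemma Wwin_le w i k : wt12 w -> 0 <= Wwin w i k <= 2^k.
Proof.
  intros H; revert i; induction k; intros i; simpl. lra.
  specialize (IHk (S i)). destruct (H i) as [-> | ->]; nra.
Qed.

Lemma half_pow_le1 k : 0 < (/2)^k <= 1.
Proof. induction k; simpl; lra. Qed.

Lemma half_le a b : (a <= b)%nat -> (/2)^b <= (/2)^a.
Proof.
  intros H. replace b with (a + (b - a))%nat by lia. rewrite pow_add.
  assert (0 < (/2)^a) by (apply pow_lt; lra).
  assert ((/2)^(b-a) <= 1) by (apply half_pow_le1). nra.
Qed.

Lemma pow2_half a b : (a <= b)%nat -> 2^a * (/2)^b = (/2)^(b - a).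
Proof.
  intros H. replace b with (a + (b - a))%nat at 1 by lia. rewrite pow_add.
  rewrite <- Rmult_assoc. rewrite <- Rpow_mult_distr. replace (2 * /2) with 1 by field.
  rewrite pow1; ring.
Qed.

Lemma INR_le_pow2 n : INR n <= 2^n.
Proof.
  induction n. simpl; lra. rewrite S_INR. simpl. assert (1 <= 2^n) by (apply pow_R1_Rle; lra). lra.
Qed.

Definition val (c : nat) : R :=
  let (sg, m) := Cantor.of_nat c in if Nat.eqb sg 0 then INR m else - INR m.

Lemma val_bound c : Rabs (val c) <= INR c.
Proof.
  unfold val. rewrite <- (cancel_to_of c) at 2. destruct (of_nat c) as [sg m].
  assert (H := to_nat_non_decreasing sg m).
  assert (INR m <= INR (to_nat (sg, m))) by (apply le_INR; lia).
  assert (0 <= INR m) by apply pos_INR.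
  destruct (Nat.eqb sg 0).
  - rewrite Rabs_pos_eq; lra.
  - rewrite Rabs_Ropp, Rabs_pos_eq; lra.
Qed.

Lemma val_code sg m : val (to_nat (sg, m)) = if Nat.eqb sg 0 then INR m else - INR m.
Proof. unfold val. rewrite cancel_of_to. reflexivity. Qed.

Lemma val_approx r : exists c, Rabs (val c - r) <= 1.
Proof.
  destruct (archimed (Rabs r)) as [H1 H2].
  assert (Hup : (0 <= up (Rabs r))%Z).
  { apply le_IZR. pose proof (Rabs_pos r). lra. }
  set (m := Z.to_nat (up (Rabs r))).
  assert (Hm : INR m = IZR (up (Rabs r))).
  { unfold m. rewrite INR_IZR_INZ. rewrite Z2Nat.id; auto. }
  destruct (Rle_dec 0 r) as [Hr | Hr].
  - exists (to_nat (0%nat, m)). rewrite val_code. simpl.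
    rewrite Rabs_pos_eq in H1, H2, Hm by lra. rewrite Rabs_pos_eq; lra.
  - exists (to_nat (1%nat, m)). rewrite val_code. simpl.
    rewrite Rabs_left in H1, H2, Hm by lra. rewrite Rabs_left1; lra.
Qed.

Fixpoint enc (l : list nat) : nat :=
  match l with nil => O | h :: t => S (Cantor.to_nat (h, enc t)) end.
Fixpoint decf (f : nat) (n : nat) : list nat :=
  match f with O => nil | S f' =>
    match n with O => nil | S k => let (h, r) := Cantor.of_nat k in h :: decf f' r end end.

Lemma decf_enc l f : (enc l <= f)%nat -> decf f (enc l) = l.
Proof.
  revert f; induction l as [|h t IH]; intros f Hf; destruct f; try (simpl in *; auto; lia).
  cbn [enc decf]. rewrite cancel_of_to. f_equal. apply IH.
  cbn [enc] in Hf. assert (H := to_nat_non_decreasing h (enc t)). lia.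
Qed.

Definition code s := fst (Cantor.of_nat s).
Definition nn s := fst (Cantor.of_nat (code s)).
Definition tc s := fst (Cantor.of_nat (snd (Cantor.of_nat (code s)))).
Definition ee s := snd (Cantor.of_nat (snd (Cantor.of_nat (code s)))).
Definition tgl s := decf (tc s) (tc s).
Definition Ln s := length (tgl s).
Definition Mx s := list_sum (tgl s).
Definition Rr s := S (Mx s).

Lemma stage_exists n t e s0 : exists s, (s0 <= s)%nat /\ nn s = n /\ tgl s = t /\ ee s = e.
Proof.
  set (c := to_nat (n, to_nat (enc t, e))).
  exists (to_nat (c, s0)).
  assert (Hc : code (to_nat (c, s0)) = c) by (unfold code; rewrite cancel_of_to; auto).
  split; [|split; [|split]].
  - assert (H := to_nat_non_decreasing c s0). lia.
  - unfold nn; rewrite Hc; unfold c; rewrite cancel_of_to; auto.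
  - unfold tgl, tc; rewrite Hc; unfold c; rewrite !cancel_of_to; cbn [fst snd]; rewrite !cancel_of_to; cbn [fst snd]. apply decf_enc; lia.
  - unfold ee; rewrite Hc; unfold c; rewrite !cancel_of_to; cbn [fst snd]; rewrite !cancel_of_to; auto.
Qed.

Lemma nth_le_sum l j : (nth j l 0 <= list_sum l)%nat.
Proof.
  revert j; induction l; intros j; destruct j; simpl; auto; try lia.
  specialize (IHl j). lia.
Qed.

Fixpoint SQ (s : nat) : nat * nat :=
  match s with
  | O => (O, O)
  | S k => let (S0, Q0) := SQ k in
           (S0 + (2 * Rr k + 2 * (S0 + Q0 + Rr k + Mx k) + Ln k), Q0 + Rr k)%nat
  end.
Definition Ss s := fst (SQ s).
Definition Qs s := snd (SQ s).
Definition Gg s := (2 * (Ss s + Qs s + Rr s + Mx s))%nat.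
Definition len s := (2 * Rr s + Gg s + Ln s)%nat.
Definition pp s := (Ss s + Rr s + Gg s)%nat.

Lemma Ss_S s : Ss (S s) = (Ss s + len s)%nat.
Proof. unfold len, Gg, Ss, Qs; simpl. destruct (SQ s); simpl. reflexivity. Qed.
Lemma Qs_S s : Qs (S s) = (Qs s + Rr s)%nat.
Proof. unfold Qs; simpl. destruct (SQ s); simpl. reflexivity. Qed.
Lemma Ss_0 : Ss 0 = O. Proof. reflexivity. Qed.
Lemma Qs_0 : Qs 0 = O. Proof. reflexivity. Qed.

Lemma Qs_le_Ss s : (Qs s <= Ss s)%nat.
Proof. induction s. auto. rewrite Ss_S, Qs_S. unfold len. lia. Qed.

Lemma Ss_lt s : (Ss s < Ss (S s))%nat.
Proof. rewrite Ss_S. unfold len, Rr. lia. Qed.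

Lemma Ss_mono s d : (Ss s + d <= Ss (s + d))%nat.
Proof.
  induction d. rewrite !Nat.add_0_r; lia.
  replace (s + S d)%nat with (S (s + d)) by lia. pose proof (Ss_lt (s+d)). lia.
Qed.

Lemma Ss_le s s' : (s <= s')%nat -> (Ss s <= Ss s')%nat.
Proof. intros H. replace s' with (s + (s' - s))%nat by lia. pose proof (Ss_mono s (s'-s)). lia. Qed.

Lemma Ss_ge s : (s <= Ss s)%nat.
Proof. pose proof (Ss_mono 0 s) as H. simpl in H. lia. Qed.

Lemma st_exP x : exists s, (Ss s <= x < Ss (S s))%nat.
Proof.
  induction x.
  - exists O. rewrite Ss_0. pose proof (Ss_lt 0). rewrite Ss_0 in H. lia.
  - destruct IHx as [s Hs]. destruct (Nat.eq_dec (S x) (Ss (S s))) as [E|E].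
    + exists (S s). pose proof (Ss_lt (S s)). lia.
    + exists s. lia.
Qed.

Definition st x := proj1_sig (constructive_indefinite_description _ (st_exP x)).
Lemma st_spec x : (Ss (st x) <= x < Ss (S (st x)))%nat.
Proof. unfold st. destruct (constructive_indefinite_description _ _); auto. Qed.

Lemma st_unique x s : (Ss s <= x < Ss (S s))%nat -> st x = s.
Proof.
  intros H. pose proof (st_spec x). set (t := st x) in *.
  destruct (Nat.lt_total t s) as [L|[E|L]]; auto.
  - pose proof (Ss_le (S t) s L). lia.
  - pose proof (Ss_le (S s) t L). lia.
Qed.

Definition off x := (x - Ss (st x))%nat.

Lemma st_in s k : (k < len s)%nat -> st (Ss s + k) = s /\ off (Ss s + k) = k.
Proof.
  intros H. assert (E : st (Ss s + k) = s) by (apply st_unique; rewrite Ss_S; lia).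
  split; auto. unfold off. rewrite E. lia.
Qed.

Lemma off_lt x : (off x < len (st x))%nat.
Proof. unfold off. pose proof (st_spec x). rewrite Ss_S in H. lia. Qed.

Lemma x_eq x : x = (Ss (st x) + off x)%nat.
Proof. unfold off. pose proof (st_spec x). lia. Qed.

Definition wloc (s : nat) (bb : bool) (k : nat) : R :=
  if (k <? Rr s)%nat then (if bb then 2 else 1)
  else if (k <? Rr s + Gg s + Ln s)%nat then 2 else (if bb then 1 else 2).
Definition Wt (b : nat -> bool) (x : nat) : R := wloc (st x) (b (nn (st x))) (off x).
Definition dval s j := val (nth j (tgl s) 0%nat) / 2 ^ (ee s).
Definition Yv (a : nat -> bool) (x : nat) : R :=
  if ((Rr (st x) + Gg (st x) <=? off x) && (off x <? Rr (st x) + Gg (st x) + Ln (st x))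
      && negb (a (nn (st x))))%bool
  then dval (st x) (off x - (Rr (st x) + Gg (st x))) * (/2) ^ (x - Qs (st x)) else 0.

Lemma Wt_12 b : wt12 (Wt b).
Proof.
  intro x. unfold Wt, wloc. destruct (_ <? _)%nat; [destruct (b _); auto|].
  destruct (_ <? _)%nat; auto. destruct (b _); auto.
Qed.

Lemma Wt_loc b s k : (k < len s)%nat -> Wt b (Ss s + k) = wloc s (b (nn s)) k.
Proof. intros H. destruct (st_in s k H) as [E1 E2]. unfold Wt. rewrite E1, E2. auto. Qed.

Lemma Wt_dep a b x : b (nn (st x)) = a (nn (st x)) -> Wt b x = Wt a x.
Proof. intros H. unfold Wt. rewrite H. auto. Qed.

Lemma Yv_dep a b x : b (nn (st x)) = a (nn (st x)) -> Yv b x = Yv a x.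
Proof. intros H. unfold Yv. rewrite H. auto. Qed.

Definition onesl s (bb : bool) k := if bb then (k - (Rr s + Gg s + Ln s))%nat else Nat.min k (Rr s).

Lemma wloc_cases s bb o : (o < len s)%nat ->
  (wloc s bb o = 2 /\ (S o - onesl s bb (S o) = S (o - onesl s bb o))%nat) \/
  (wloc s bb o = 1 /\ (S o - onesl s bb (S o) = o - onesl s bb o)%nat).
Proof.
  intros H. unfold len in H. unfold wloc, onesl.
  destruct bb; destruct (Nat.ltb_spec o (Rr s)); destruct (Nat.ltb_spec o (Rr s + Gg s + Ln s));
  try lia.
  - left; split; auto; lia.
  - left; split; auto; lia.
  - right; split; auto; lia.
  - right; split; auto; lia.
  - left; split; auto; lia.
  - left; split; auto; lia.
Qed.

Lemma prod_loc b s o : (o <= len s)%nat ->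
  Pp (Wt b) (Ss s + o) = Pp (Wt b) (Ss s) * 2^(o - onesl s (b (nn s)) o).
Proof.
  induction o; intros H.
  - rewrite Nat.add_0_r. unfold onesl. destruct (b (nn s)); simpl; ring.
  - replace (Ss s + S o)%nat with (S (Ss s + o)) by lia. simpl Pp.
    rewrite IHo by lia. rewrite Wt_loc by lia.
    destruct (wloc_cases s (b (nn s)) o) as [[E1 E2]|[E1 E2]]; try lia;
      rewrite E1, E2; simpl; ring.
Qed.

Lemma P_Ss b s : Pp (Wt b) (Ss s) = 2^(Ss s - Qs s).
Proof.
  induction s.
  - simpl. reflexivity.
  - rewrite Ss_S at 1. rewrite prod_loc by lia. rewrite IHs.
    assert (E : onesl s (b (nn s)) (len s) = Rr s)
      by (unfold onesl, len; destruct (b (nn s)); lia).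
    rewrite E, <- pow_add. f_equal. rewrite Ss_S, Qs_S. pose proof (Qs_le_Ss s). unfold len. lia.
Qed.

Lemma P_block b s j : (j <= Ln s)%nat ->
  Pp (Wt b) (pp s + j) = 2^(pp s + j - Qs s - (if b (nn s) then 0 else Rr s)).
Proof.
  intros H. unfold pp. replace (Ss s + Rr s + Gg s + j)%nat with (Ss s + (Rr s + Gg s + j))%nat by lia.
  rewrite prod_loc by (unfold len; lia). rewrite P_Ss, <- pow_add. f_equal.
  pose proof (Qs_le_Ss s). unfold onesl; destruct (b (nn s)); lia.
Qed.

Lemma P_lower b s m : (m <= Ss s)%nat -> 2^m <= Pp (Wt b) m * 2^(Qs s).
Proof.
  intros H. assert (Hm := Pp_mono (Wt b) m (Ss s - m) (Wt_12 b)).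
  replace (m + (Ss s - m))%nat with (Ss s) in Hm by lia. rewrite P_Ss in Hm.
  assert (0 < 2^(Ss s - m)) by (apply pow_lt; lra).
  apply (Rmult_le_reg_r (2^(Ss s - m))); auto.
  rewrite <- pow_add. replace (m + (Ss s - m))%nat with ((Ss s - Qs s) + Qs s)%nat
    by (pose proof (Qs_le_Ss s); lia).
  rewrite pow_add. assert (0 < 2^(Qs s)) by (apply pow_lt; lra). nra.
Qed.

Lemma Y_block a s j : (j < Ln s)%nat ->
  Yv a (pp s + j) = if a (nn s) then 0 else dval s j * (/2)^(pp s + j - Qs s).
Proof.
  intros H. unfold pp.
  replace (Ss s + Rr s + Gg s + j)%nat with (Ss s + (Rr s + Gg s + j))%nat by lia.
  destruct (st_in s (Rr s + Gg s + j)) as [E1 E2]. unfold len; lia.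
  unfold Yv. rewrite E1, E2.
  replace (Rr s + Gg s <=? Rr s + Gg s + j)%nat with true by (symmetry; apply Nat.leb_le; lia).
  replace (Rr s + Gg s + j <? Rr s + Gg s + Ln s)%nat with true by (symmetry; apply Nat.ltb_lt; lia).
  destruct (a (nn s)); cbn [negb andb]; auto.
  replace (Rr s + Gg s + j - (Rr s + Gg s))%nat with j by lia.
  replace (Ss s + (Rr s + Gg s + j))%nat with (Ss s + Rr s + Gg s + j)%nat by lia. auto.
Qed.

Lemma Y_nz a x : Yv a x <> 0 -> exists j, (j < Ln (st x))%nat /\ x = (pp (st x) + j)%nat /\ a (nn (st x)) = false.
Proof.
  intros H. unfold Yv in H.
  destruct (Nat.leb_spec (Rr (st x) + Gg (st x)) (off x)); cbn [andb negb] in H; [|exfalso; apply H; reflexivity].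
  destruct (Nat.ltb_spec (off x) (Rr (st x) + Gg (st x) + Ln (st x))); cbn [andb negb] in H; [|exfalso; apply H; reflexivity].
  destruct (a (nn (st x))) eqn:E; cbn [andb negb] in H; [exfalso; apply H; reflexivity|].
  exists (off x - (Rr (st x) + Gg (st x)))%nat. split; [lia|split; auto].
  pose proof (x_eq x). unfold pp. lia.
Qed.

Lemma dval_bound s j : Rabs (dval s j) <= INR (Mx s).
Proof.
  unfold dval. unfold Rdiv. rewrite Rabs_mult.
  assert (H1 := val_bound (nth j (tgl s) 0%nat)).
  assert (H2 : (nth j (tgl s) 0 <= Mx s)%nat) by apply nth_le_sum.
  apply le_INR in H2.
  assert (0 < 2^(ee s)) by (apply pow_lt; lra).
  assert (1 <= 2^(ee s)) by (apply pow_R1_Rle; lra).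
  rewrite (Rabs_pos_eq (/ _)) by (left; apply Rinv_0_lt_compat; auto).
  assert (/ 2^(ee s) <= 1).
  { rewrite <- Rinv_1. apply Rinv_le_contravar; lra. }
  assert (0 < / 2^(ee s)) by (apply Rinv_0_lt_compat; auto).
  pose proof (Rabs_pos (val (nth j (tgl s) 0%nat))). nra.
Qed.

Lemma sq_le_half u m k t : Rabs u <= 2^m * (/2)^k -> (m <= k)%nat -> (t <= 2*(k-m))%nat -> u^2 <= (/2)^t.
Proof.
  intros H Hmk Ht. rewrite pow2_half in H by auto.
  rewrite <- pow2_abs. pose proof (Rabs_pos u).
  apply Rle_trans with (((/2)^(k-m))^2). { nra. }
  rewrite <- pow_mult. apply half_le. lia.
Qed.

Lemma Y_sq a x : (Yv a x)^2 <= (/2)^x.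
Proof.
  destruct (Req_dec (Yv a x) 0) as [E|E].
  { rewrite E. pose proof (half_pow_le1 x). simpl. lra. }
  destruct (Y_nz a x E) as (j & Hj & Hx & Ha).
  set (s := st x) in *. rewrite Hx. rewrite Y_block by auto. rewrite Ha.
  apply (sq_le_half _ (Mx s) (pp s + j - Qs s)).
  - rewrite Rabs_mult. rewrite (Rabs_pos_eq ((/2)^_)) by (left; apply pow_lt; lra).
    pose proof (dval_bound s j). pose proof (INR_le_pow2 (Mx s)).
    pose proof (half_pow_le1 (pp s + j - Qs s)). nra.
  - unfold pp, Gg. lia.
  - unfold pp, Gg. lia.
Qed.

Lemma Y_l2 a : in_l2 (Yv a).
Proof.
  unfold in_l2. apply (ex_series_dom _ (fun x => 1 * (/2)^x)).
  - intro n. split. apply pow2_ge_0. rewrite Rmult_1_l. apply Y_sq.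
  - apply ex_series_geomc.
Qed.

Lemma nonHC_bound a b k : (forall n, b n = true -> a n = true) ->
  Rabs (Pp (Wt b) k * Yv a k) <= /2.
Proof.
  intros Hab.
  destruct (Req_dec (Yv a k) 0) as [E|E].
  { rewrite E, Rmult_0_r, Rabs_R0. lra. }
  destruct (Y_nz a k E) as (j & Hj & Hx & Ha).
  set (s := st k) in *.
  assert (Hb : b (nn s) = false).
  { destruct (b (nn s)) eqn:Eb; auto. rewrite (Hab _ Eb) in Ha. discriminate. }
  rewrite Hx. rewrite Y_block, P_block by lia. rewrite Ha, Hb.
  set (K := (pp s + j - Qs s)%nat).
  replace (pp s + j - Qs s - Rr s)%nat with (K - Rr s)%nat by (unfold K; lia).
  replace (2 ^ (K - Rr s) * (dval s j * (/ 2) ^ K)) with (dval s j * (2^(K - Rr s) * (/2)^K)) by ring.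
  rewrite pow2_half by (unfold K, pp, Gg; lia).
  replace (K - (K - Rr s))%nat with (Rr s) by (unfold K, pp, Gg; lia).
  rewrite Rabs_mult, (Rabs_pos_eq ((/2)^_)) by (left; apply pow_lt; lra).
  pose proof (dval_bound s j). pose proof (INR_le_pow2 (Mx s)).
  unfold Rr. simpl pow.
  assert (E1 : 2^(Mx s) * (/2)^(Mx s) = 1).
  { rewrite pow2_half by lia. rewrite Nat.sub_diag. simpl. auto. }
  pose proof (half_pow_le1 (Mx s)). pose proof (Rabs_pos (dval s j)). nra.
Qed.

Lemma match_val a b s i : b (nn s) = true -> a (nn s) = false -> (i < Ln s)%nat ->
  Bw_iter (Wt b) (pp s) (Yv a) i = dval s i / Pp (Wt b) i.
Proof.
  intros Hb Ha Hi. rewrite Bw_iter_eq.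
  assert (Hp : 0 < Pp (Wt b) i) by (pose proof (Pp_ge1 _ i (Wt_12 b)); lra).
  assert (H := Pp_Wwin (Wt b) i (pp s)).
  replace (i + pp s)%nat with (pp s + i)%nat in * by lia.
  rewrite P_block in H by lia. rewrite Y_block by lia. rewrite Ha, Hb in *.
  rewrite Nat.sub_0_r in H.
  apply (Rmult_eq_reg_l (Pp (Wt b) i)); [|lra].
  replace (Pp (Wt b) i * (dval s i / Pp (Wt b) i)) with (dval s i) by (field; lra).
  replace (Pp (Wt b) i * (Wwin (Wt b) i (pp s) * (dval s i * (/ 2) ^ (pp s + i - Qs s))))
    with ((Pp (Wt b) i * Wwin (Wt b) i (pp s)) * (/ 2) ^ (pp s + i - Qs s) * dval s i) by ring.
  rewrite H. rewrite pow2_half by lia. rewrite Nat.sub_diag. simpl. ring.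
Qed.

Lemma later_bound a b s i : (Ln s <= i)%nat ->
  (Bw_iter (Wt b) (pp s) (Yv a) i)^2 <= (/2)^(pp s + i).
Proof.
  intros Hi. rewrite Bw_iter_eq.
  destruct (Req_dec (Yv a (i + pp s)) 0) as [E|E].
  { rewrite E, Rmult_0_r. pose proof (half_pow_le1 (pp s + i)). simpl. lra. }
  destruct (Y_nz a _ E) as (j & Hj & Hx & Ha).
  set (x := (i + pp s)%nat) in *. set (s' := st x) in *.
  assert (Hss : (s < s')%nat).
  { destruct (Nat.lt_total s s') as [L|[Eq|L]]; auto.
    - rewrite <- Eq in Hx, Hj. unfold x in Hx. lia.
    - exfalso. pose proof (Ss_le (S s') s L). rewrite Ss_S in H.
      unfold pp, len in *. lia. }
  assert (Hps : (pp s < Ss s')%nat).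
  { pose proof (Ss_le (S s) s' Hss). rewrite Ss_S in H. unfold pp, len, Rr in *. lia. }
  assert (Hp : 0 < Pp (Wt b) i) by (pose proof (Pp_ge1 _ i (Wt_12 b)); lra).
  assert (HW := Pp_Wwin (Wt b) i (pp s)). fold x in HW.
  assert (HC : Rabs (Pp (Wt b) x * Yv a x) <= INR (Mx s')).
  { rewrite Hx. rewrite P_block, Y_block by lia. rewrite Ha.
    set (K := (pp s' + j - Qs s')%nat).
    set (r := if b (nn s') then 0%nat else Rr s').
    replace (pp s' + j - Qs s' - r)%nat with (K - r)%nat by (unfold K; lia).
    replace (2 ^ (K - r) * (dval s' j * (/ 2) ^ K)) with (dval s' j * (2^(K - r) * (/2)^K)) by ring.
    rewrite pow2_half by lia.
    rewrite Rabs_mult, (Rabs_pos_eq ((/2)^_)) by (left; apply pow_lt; lra).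
    pose proof (dval_bound s' j). pose proof (half_pow_le1 (K - (K - r))).
    pose proof (Rabs_pos (dval s' j)). nra. }
  assert (HL : 2^i <= Pp (Wt b) i * 2^(Qs (S s'))).
  { apply P_lower. pose proof (st_spec x). fold s' in H. unfold x in *. lia. }
  rewrite Qs_S in HL.
  set (u := Wwin (Wt b) i (pp s) * Yv a x).
  assert (Hu : Pp (Wt b) i * u = Pp (Wt b) x * Yv a x) by (unfold u; rewrite <- Rmult_assoc, HW; auto).
  apply (sq_le_half u (Mx s' + Qs s' + Rr s') i).
  - assert (Habs : Pp (Wt b) i * Rabs u <= INR (Mx s')).
    { rewrite <- (Rabs_pos_eq (Pp (Wt b) i)) by lra. rewrite <- Rabs_mult, Hu. auto. }
    assert (0 < 2^i) by (apply pow_lt; lra).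
    assert (Hq : 0 < 2^(Qs s' + Rr s')) by (apply pow_lt; lra).
    assert (H2 : Rabs u * 2^i <= INR (Mx s') * 2^(Qs s' + Rr s')).
    { pose proof (Rabs_pos u). nra. }
    pose proof (INR_le_pow2 (Mx s')).
    assert (H3 : Rabs u * 2^i <= 2^(Mx s' + Qs s' + Rr s')).
    { rewrite <- Nat.add_assoc, pow_add. nra. }
    assert (E2 : 2^i * (/2)^i = 1) by (rewrite pow2_half, Nat.sub_diag by lia; simpl; auto).
    pose proof (half_pow_le1 i).
    assert (H4 : Rabs u * 2^i * (/2)^i <= 2^(Mx s' + Qs s' + Rr s') * (/2)^i)
      by (apply Rmult_le_compat_r; [lra|auto]).
    rewrite Rmult_assoc, E2, Rmult_1_r in H4. exact H4.
  - pose proof (st_spec x). fold s' in H. unfold x in *. unfold pp, Gg in *. lia.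
  - pose proof (st_spec x). fold s' in H. unfold x in *. unfold pp, Gg in *. lia.
Qed.

Lemma Bk_l2 b a k : in_l2 (Bw_iter (Wt b) k (Yv a)).
Proof.
  unfold in_l2. apply (ex_series_dom _ (fun i => ((2^k)^2) * (/2)^i)).
  - intro i. split. apply pow2_ge_0. rewrite Bw_iter_eq.
    destruct (Wwin_le (Wt b) i k (Wt_12 b)) as [W1 W2].
    pose proof (Y_sq a (i + k)). rewrite pow_add in H.
    pose proof (half_pow_le1 i). pose proof (half_pow_le1 k).
    rewrite Rpow_mult_distr.
    assert (Wwin (Wt b) i k ^ 2 <= (2^k)^2) by nra.
    assert (Yv a (i+k) ^2 <= (/2)^i) by nra.
    pose proof (pow2_ge_0 (Yv a (i+k))). pose proof (pow2_ge_0 (Wwin (Wt b) i k)). nra.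
  - apply ex_series_geomc.
Qed.

Lemma nonHC_nat a b : (forall n, b n = true -> a n = true) -> ~ HC (Wt b) (Yv a).
Proof.
  intros Hab [_ Hd].
  set (z := fun i : nat => if Nat.eqb i 0 then 1 else 0).
  assert (Hz : in_l2 z).
  { unfold in_l2. apply (ex_series_dom _ (fun i => 1 * (/2)^i)); [|apply ex_series_geomc].
    intro i. split. apply pow2_ge_0. unfold z. destruct (Nat.eqb_spec i 0).
    - subst. simpl. lra.
    - pose proof (half_pow_le1 i). simpl. lra. }
  destruct (Hd z Hz (/2)) as [k Hk]. lra.
  assert (H1 := l2dist_ge_coord _ _ 0 (Bk_l2 b a k) Hz).
  rewrite Bw_iter_eq in H1. simpl (0 + k)%nat in H1.
  assert (HP := Pp_Wwin (Wt b) 0 k). simpl Pp in HP. rewrite Rmult_1_l in HP. simpl (0 + k)%nat in HP.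
  rewrite HP in H1. assert (H2 := nonHC_bound a b k Hab).
  change (z 0%nat) with 1 in H1.
  assert (Rabs (Pp (Wt b) k * Yv a k - 1) >= /2).
  { apply Rabs_le_between in H2. destruct (Rle_dec 0 (Pp (Wt b) k * Yv a k - 1)).
    rewrite Rabs_pos_eq; lra. rewrite Rabs_left; lra. }
  lra.
Qed.

Lemma dval_map s e (cf : nat -> nat) L i : tgl s = map cf (seq 0 L) -> ee s = e -> (i < L)%nat ->
  dval s i = val (cf i) / 2^e.
Proof.
  intros Ht He Hi. unfold dval. rewrite Ht, He.
  rewrite (nth_indep _ 0%nat (cf 0%nat)) by (rewrite length_map, length_seq; auto).
  rewrite map_nth, seq_nth by auto. auto.
Qed.

Lemma HC_nat a b n : b n = true -> a n = false -> HC (Wt b) (Yv a).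
Proof.
  intros Hb Ha. split; [apply Y_l2|]. intros z Hz eps Heps.
  set (E := eps^2). assert (HE : 0 < E) by (unfold E; nra).
  destruct (tail_small (fun i => z i ^2) (E/8)) as [N HN]; auto.
  { intro; apply pow2_ge_0. } { lra. }
  set (L := S N).
  assert (HL : 0 < INR L) by (apply lt_0_INR; unfold L; lia).
  destruct (pow_lt_1_zero (/2) ltac:(rewrite Rabs_pos_eq; lra) (E / (4 * INR L))) as [e He].
  { apply Rdiv_lt_0_compat; lra. }
  specialize (He e (le_n e)). rewrite Rabs_pos_eq in He by (left; apply pow_lt; lra).
  destruct (pow_lt_1_zero (/2) ltac:(rewrite Rabs_pos_eq; lra) (E / 16)) as [s0 Hs0]. lra.
  specialize (Hs0 s0 (le_n s0)). rewrite Rabs_pos_eq in Hs0 by (left; apply pow_lt; lra).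
  assert (Hc : forall i, exists c, Rabs (val c - z i * Pp (Wt b) i * 2^e) <= 1) by (intro; apply val_approx).
  set (cf := fun i => proj1_sig (constructive_indefinite_description _ (Hc i))).
  assert (Hcf : forall i, Rabs (val (cf i) - z i * Pp (Wt b) i * 2^e) <= 1).
  { intro i. unfold cf. destruct (constructive_indefinite_description _ _); auto. }
  destruct (stage_exists n (map cf (seq 0 L)) e s0) as (s & Hs & Hn & Ht & Hee).
  exists (pp s).
  assert (HLn : Ln s = L) by (unfold Ln; rewrite Ht, length_map, length_seq; auto).
  set (u := Bw_iter (Wt b) (pp s) (Yv a)).
  assert (Hsmall : forall i, (i < L)%nat -> Rabs (u i - z i) <= (/2)^e).
  { intros i Hi. unfold u. rewrite match_val by (try rewrite Hn; auto; lia).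
    rewrite (dval_map s e cf L i) by auto.
    assert (HP : 1 <= Pp (Wt b) i) by (apply Pp_ge1, Wt_12).
    assert (H2 : 0 < 2^e) by (apply pow_lt; lra).
    replace (val (cf i) / 2 ^ e / Pp (Wt b) i - z i) with
      ((val (cf i) - z i * Pp (Wt b) i * 2^e) * (/2)^e / Pp (Wt b) i)
      by (rewrite pow_inv; field; split; lra).
    unfold Rdiv. rewrite !Rabs_mult. rewrite (Rabs_pos_eq ((/2)^e)) by (left; apply pow_lt; lra).
    rewrite (Rabs_pos_eq (/ Pp (Wt b) i)) by (left; apply Rinv_0_lt_compat; lra).
    assert (/ Pp (Wt b) i <= 1) by (rewrite <- Rinv_1; apply Rinv_le_contravar; lra).
    assert (0 < / Pp (Wt b) i) by (apply Rinv_0_lt_compat; lra).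
    pose proof (Hcf i). pose proof (half_pow_le1 e). pose proof (Rabs_pos (val (cf i) - z i * Pp (Wt b) i * 2 ^ e)).
    set (X := Rabs (val (cf i) - z i * Pp (Wt b) i * 2 ^ e)) in *.
    set (q := (/2)^e) in *. set (r := / Pp (Wt b) i) in *.
    assert (X * q <= q) by nra. assert (0 <= X * q) by nra. nra. }
  set (c0 := ((/2)^e)^2).
  set (h1 := fun i => if (i <? L)%nat then c0 else 2 * z i ^2).
  set (h2 := fun i => (2 * (/2)^(pp s)) * (/2)^i).
  assert (Hdom : forall i, 0 <= (u i - z i)^2 <= h1 i + h2 i).
  { intro i. split. apply pow2_ge_0. unfold h1, h2.
    assert (0 <= 2 * (/2)^(pp s) * (/2)^i) by (pose proof (half_pow_le1 (pp s)); pose proof (half_pow_le1 i); nra).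
    destruct (Nat.ltb_spec i L).
    - specialize (Hsmall i H0). rewrite <- pow2_abs. unfold c0. pose proof (Rabs_pos (u i - z i)).
      assert (Rabs (u i - z i) ^2 <= ((/2)^e)^2) by nra. lra.
    - pose proof (sq_diff_le (u i) (z i)). pose proof (later_bound a b s i ltac:(lia)). fold u in H2.
      rewrite pow_add in H2. nra. }
  assert (Eh1 : ex_series h1).
  { apply (ex_series_incr_n h1 L). apply (ex_series_ext (fun k => 2 * z (L + k)%nat ^2)).
    { intro k. unfold h1. destruct (Nat.ltb_spec (L + k) L); [lia|auto]. }
    apply (ex_series_scal_l 2 (fun k => z (L + k)%nat ^2)).
    apply (ex_series_incr_n (fun i => z i ^ 2) L). auto. }
  assert (Eh2 : ex_series h2) by apply ex_series_geomc.
  assert (Eh : ex_series (fun i => h1 i + h2 i)) by (apply (ex_series_plus h1 h2); auto).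
  assert (Es : ex_series (fun i => (u i - z i)^2)) by (apply (ex_series_dom _ _ Hdom Eh)).
  apply l2dist_lt; auto. fold E.
  apply Rle_lt_trans with (Series (fun i => h1 i + h2 i)). { apply Series_le; auto. }
  rewrite Series_plus by auto. unfold h2. rewrite Series_geomc.
  rewrite (Series_incr_n h1 L) by (unfold L; auto; lia).
  rewrite (sum_const_upto h1 (Init.Nat.pred L) c0).
  2:{ intros i Hi. unfold h1. destruct (Nat.ltb_spec i L); auto. unfold L in *. simpl in Hi. lia. }
  rewrite (Series_ext _ (fun k => 2 * z (S N + k)%nat ^ 2)).
  2:{ intro k. unfold h1. destruct (Nat.ltb_spec (L + k) L); [lia|auto]. }
  rewrite Series_scal_l.
  replace (S (Init.Nat.pred L)) with L by (unfold L; auto).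
  assert (c0 <= (/2)^e) by (unfold c0; pose proof (half_pow_le1 e); nra).
  assert (INR L * c0 < E / 4).
  { assert (INR L * (/2)^e < INR L * (E / (4 * INR L))) by (apply Rmult_lt_compat_l; auto).
    replace (INR L * (E / (4 * INR L))) with (E/4) in H0 by (field; lra). nra. }
  assert ((/2)^(pp s) <= (/2)^s0).
  { apply half_le. pose proof (Ss_ge s). unfold pp. lia. }
  lra.
Qed.

Lemma ycont_nat a eps : 0 < eps -> exists F : list nat,
  forall b, (forall n, In n F -> b n = a n) -> l2dist (Yv b) (Yv a) < eps.
Proof.
  intros Heps. set (E := eps^2). assert (HE : 0 < E) by (unfold E; nra).
  destruct (pow_lt_1_zero (/2) ltac:(rewrite Rabs_pos_eq; lra) (E / 16)) as [K0 HK0]. lra.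
  set (K := S K0). specialize (HK0 K ltac:(unfold K; lia)).
  rewrite Rabs_pos_eq in HK0 by (left; apply pow_lt; lra).
  exists (map nn (seq 0 K)). intros b Hb.
  set (X := Ss K). assert (HX : (K <= X)%nat) by apply Ss_ge.
  set (D := fun x => (Yv b x - Yv a x)^2).
  assert (HD0 : forall x, (x < X)%nat -> D x = 0).
  { intros x Hx. unfold D. rewrite (Yv_dep a b x). ring.
    apply Hb. apply in_map. apply in_seq.
    pose proof (st_spec x). destruct (Nat.lt_ge_cases (st x) K); [lia|].
    pose proof (Ss_le K (st x) H0). unfold X in *. lia. }
  assert (ED : ex_series D) by (apply l2_diff; apply Y_l2).
  apply l2dist_lt; auto. fold D. fold E.
  rewrite (Series_incr_n D X) by (auto; unfold K in HX; lia).
  rewrite sum_zero_upto by (intros; apply HD0; unfold K in HX; lia). rewrite Rplus_0_l.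
  apply Rle_lt_trans with (Series (fun k => (4 * (/2)^X) * (/2)^k)).
  - apply Series_le. 2: apply ex_series_geomc.
    intro k. split. apply pow2_ge_0. unfold D.
    pose proof (sq_diff_le (Yv b (X+k)) (Yv a (X+k))).
    pose proof (Y_sq b (X+k)). pose proof (Y_sq a (X+k)). rewrite pow_add in *. nra.
  - rewrite Series_geomc. assert ((/2)^X <= (/2)^K) by (apply half_le; auto). lra.
Qed.

Lemma yinv_nat a n : exists d, 0 < d /\ forall b, l2dist (Yv b) (Yv a) < d -> b n = a n.
Proof.
  set (c1 := to_nat (0%nat, 1%nat)).
  destruct (stage_exists n (c1 :: nil) 0 0) as (s & _ & Hn & Ht & He).
  exists ((/2)^(pp s + 0 - Qs s)). split. apply pow_lt; lra.
  intros b Hd. destruct (Bool.bool_dec (b n) (a n)) as [E|E]; auto. exfalso.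
  assert (HL : (0 < Ln s)%nat) by (unfold Ln; rewrite Ht; simpl; lia).
  assert (H := l2dist_ge_coord (Yv b) (Yv a) (pp s + 0) (Y_l2 b) (Y_l2 a)).
  rewrite !Y_block in H by auto. rewrite Hn in H.
  assert (Hv : dval s 0 = 1).
  { unfold dval. rewrite Ht, He. simpl nth. unfold c1. rewrite val_code. simpl. field. }
  rewrite Hv in H.
  destruct (b n), (a n); try congruence.
  - rewrite Rmult_1_l, Rminus_0_l, Rabs_Ropp, Rabs_pos_eq in H by (left; apply pow_lt; lra). lra.
  - rewrite Rmult_1_l, Rminus_0_r, Rabs_pos_eq in H by (left; apply pow_lt; lra). lra.
Qed.

Lemma winv_nat a n : exists N, forall b, (forall i, (i < N)%nat -> Wt b i = Wt a i) -> b n = a n.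
Proof.
  destruct (stage_exists n nil 0 0) as (s & _ & Hn & _ & _).
  exists (S (Ss s)). intros b H. specialize (H (Ss s) ltac:(lia)).
  replace (Ss s) with (Ss s + 0)%nat in H by lia.
  rewrite !Wt_loc in H by (unfold len, Rr; lia). rewrite Hn in H.
  unfold wloc in H. replace (0 <? Rr s)%nat with true in H by (symmetry; apply Nat.ltb_lt; unfold Rr; lia).
  destruct (b n), (a n); auto; lra.
Qed.

Theorem lemma7 (A : Type) (hA : countable_type A) :
  exists (y : (A -> bool) -> nat -> R) (w : (A -> bool) -> nat -> R),
    (forall a, in_l2 (y a)) /\
    (forall a, is_weight (w a)) /\
    (forall a b : A -> bool, HC (w b) (y a) <-> ~ subset_of b a) /\
    homeo_onto_range_l2 y /\
    homeo_onto_range_w w.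
Proof.
  destruct hA as [f Hf].
  set (tr := fun (a : A -> bool) (n : nat) =>
    if excluded_middle_informative (exists u, f u = n /\ a u = true) then true else false).
  assert (tr_f : forall a u, tr a (f u) = a u).
  { intros a u. unfold tr. destruct (excluded_middle_informative _) as [[v [Hv1 Hv2]]|Hn].
    - apply Hf in Hv1. subst. auto.
    - destruct (a u) eqn:E; auto. exfalso; apply Hn; eauto. }
  assert (tr_none : forall a n, (~ exists u, f u = n) -> tr a n = false).
  { intros a n H. unfold tr. destruct (excluded_middle_informative _) as [[v [Hv1 Hv2]]|Hn]; auto.
    exfalso; apply H; eauto. }
  assert (tr_sub : forall a b, subset_of b a <-> (forall n, tr b n = true -> tr a n = true)).
  { intros a b. split.
    - intros H n Hn. destruct (classic (exists u, f u = n)) as [[u Hu]|Hu].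
      + subst. rewrite tr_f in *. auto.
      + rewrite tr_none in Hn; auto; discriminate.
    - intros H u Hu. rewrite <- tr_f. apply H. rewrite tr_f. auto. }
  set (g := fun n => match excluded_middle_informative (exists u, f u = n) with
                     | left H => Some (proj1_sig (constructive_indefinite_description _ H))
                     | right _ => None end).
  assert (g_some : forall n u, g n = Some u -> f u = n).
  { intros n u. unfold g. destruct (excluded_middle_informative _); [|discriminate].
    destruct (constructive_indefinite_description _ _) as [v Hv]. simpl. intros E; inversion E; subst; auto. }
  assert (g_ex : forall n, (exists u, f u = n) -> exists u, g n = Some u).
  { intros n H. unfold g. destruct (excluded_middle_informative _); [|contradiction]. eauto. }
  set (FA := fun F : list nat => flat_map (fun n => match g n with Some u => u :: nil | None => nil end) F).
  assert (FA_agree : forall F a b, agree_on (FA F) a b -> forall n, In n F -> tr b n = tr a n).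
  { intros F a b H n Hn. destruct (classic (exists u, f u = n)) as [Hu|Hu].
    - destruct (g_ex n Hu) as [u Hg]. pose proof (g_some n u Hg). subst n.
      rewrite !tr_f. apply H. unfold FA. apply in_flat_map. exists (f u). split; auto.
      rewrite Hg. simpl; auto.
    - rewrite !tr_none; auto. }
  exists (fun a => Yv (tr a)), (fun b => Wt (tr b)).
  split; [|split; [|split; [|split]]].
  - intro a. apply Y_l2.
  - intro a. apply Wt_12.
  - intros a b. split.
    + intros H Hsub. apply (nonHC_nat (tr a) (tr b)); auto. apply tr_sub; auto.
    + intros Hns. assert (exists u, b u = true /\ a u = false).
      { apply NNPP. intro Hn. apply Hns. intros u Hu. destruct (a u) eqn:E; auto.
        exfalso; apply Hn; eauto. }
      destruct H as [u [Hb Ha]]. apply (HC_nat _ _ (f u)); rewrite tr_f; auto.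
  - split; [|split].
    + intros a b Heq. apply functional_extensionality. intro u.
      destruct (yinv_nat (tr b) (f u)) as [d [Hd H]].
      rewrite <- (tr_f a u), <- (tr_f b u). apply H. rewrite Heq, l2dist_self. auto.
    + intros a eps Heps. destruct (ycont_nat (tr a) eps Heps) as [F HF].
      exists (FA F). intros b Hb. apply HF. apply FA_agree; auto.
    + intros a u. destruct (yinv_nat (tr a) (f u)) as [d [Hd H]].
      exists d. split; auto. intros b Hb. rewrite <- (tr_f a u), <- (tr_f b u). auto.
  - split; [|split].
    + intros a b Heq. apply functional_extensionality. intro u.
      destruct (winv_nat (tr b) (f u)) as [N H].
      rewrite <- (tr_f a u), <- (tr_f b u). apply H. intros i _. rewrite Heq. auto.
    + intros a i. exists (FA (nn (st i) :: nil)). intros b Hb. apply Wt_dep.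
      apply (FA_agree _ a b Hb). simpl; auto.
    + intros a u. destruct (winv_nat (tr a) (f u)) as [N H].
      exists N. intros b Hb. rewrite <- (tr_f a u), <- (tr_f b u). auto.
Qed.
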